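(* Let $G$ be a finite simple graph with no induced banner, and let $H$ be a homogeneous set of $G$. Then $G$ contains no induced odd hole if and only if both $G[H]$ and $G[(V(G)\setminus H) \cup \{h\}]$ contain no induced odd hole, for any vertex $h \in H$.
   Context: A hole is a chordless (induced) cycle with at least four vertices; it is odd if it has an odd number of vertices. A banner is the graph consisting of a hole on four vertices together with one additional vertex adjacent to exactly one vertex of that hole. A set $H \subseteq V(G)$ is homogeneous if $2 \leq |H| < |V(G)|$ and every vertex of $V(G)\setminus H$ is adjacent either to all of $H$ or to none of $H$. *)

(* Defs.v *)
(* A finite simple graph is a finType T with a symmetric,
   irreflexive adjacency relation e : rel T. *)
From mathcomp Require Import all_boot.
Local Open Scope nat_scope.
Set Implicit Arguments. Unset Strict Implicit. Unset Printing Implicit Defensive.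

Section Graphs.
Variables (T : finType) (e : rel T).

(* f : 'I_n -> T enumerates, in cyclic order, the vertices of a hole of the
   induced subgraph G[S]: n >= 4 distinct vertices of S, where f i and f j are
   adjacent iff they are cyclically consecutive (chordless cycle). *)
Definition is_hole (S : {set T}) (n : nat) (f : 'I_n -> T) : Prop :=
  (4 <= n) /\ injective f /\ (forall i, f i \in S) /\
  (forall i j : 'I_n,
     e (f i) (f j) = ((i.+1 %% n == j) || (j.+1 %% n == i))).

Definition no_odd_hole (S : {set T}) : Prop :=
  ~ exists (n : nat) (f : 'I_n -> T), odd n /\ @is_hole S n f.

Definition has_induced_banner : Prop :=
  exists a b c d x : T,
    [/\ uniq [:: a; b; c; d; x],
        [&& e a b, e b c, e c d, e d a, ~~ e a c & ~~ e b d] &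
        [&& e x a, ~~ e x b, ~~ e x c & ~~ e x d]].

Definition homogeneous (H : {set T}) : Prop :=
  2 <= #|H| < #|T| /\
  forall v, v \notin H -> (forall h, h \in H -> e v h) \/ (forall h, h \in H -> ~~ e v h).

End Graphs.

(* Main.v *)
Require Import Defs.
From mathcomp Require Import all_boot.
From mathcomp Require Import zify.

Lemma succ_ord m (x : 'I_m.+1) : exists y : 'I_m.+1,
  (x < m /\ (y : nat) = x.+1) \/ ((x : nat) = m /\ (y : nat) = 0).
Proof.
have hx := ltn_ord x.
case: (ltnP x m) => h.
  exists (inord x.+1); left; split => //; rewrite inordK //.
exists (inord 0); right; rewrite inordK //; lia.
Qed.

Lemma key (T : finType) (e : rel T) (H : {set T}) n (f : 'I_n -> T) :
  odd n -> 4 <= n ->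
  (forall i j : 'I_n, e (f i) (f j) = ((i.+1 %% n == j) || (j.+1 %% n == i))) ->
  (forall v, v \notin H -> (forall x, x \in H -> e v x) \/ (forall x, x \in H -> ~~ e v x)) ->
  forall i j k, i != j -> f i \in H -> f j \in H -> f k \notin H -> False.
Proof.
case: n f => [|m] f Ho H4 Hadj Hh i j k ij fi fj fk; first by case: k fk.
have m4 : 4 <= m.
  have : m.+1 != 4 by apply/eqP => E; rewrite E in Ho.
  lia.
have modS : forall a, a < m.+1 -> a.+1 %% m.+1 = if a == m then 0 else a.+1.
  move=> a ha; case: ((a : nat) =P m) => [->|ne]; first by rewrite modnn.
  rewrite modn_small //; lia.
have adj : forall a b : 'I_m.+1, e (f a) (f b) <->
    ((a : nat).+1 = b \/ (b : nat).+1 = a \/ ((a : nat) = m /\ (b : nat) = 0)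
     \/ ((b : nat) = m /\ (a : nat) = 0)).
  move=> a b; have ha := ltn_ord a; have hb := ltn_ord b.
  rewrite Hadj !modS //.
  case: ((a : nat) =P m) => Ha; case: ((b : nat) =P m) => Hb /=;
    split; [case/orP => /eqP; lia | move=> ?; apply/orP; lia
           |case/orP => /eqP; lia | move=> ?; apply/orP; lia
           |case/orP => /eqP; lia | move=> ?; apply/orP; lia
           |case/orP => /eqP; lia | move=> ?; apply/orP; lia].
have [p [sp [fp [fsp hsp]]]] : exists p sp : 'I_m.+1, f p \notin H /\ f sp \in H /\
    ((p < m /\ (sp : nat) = p.+1) \/ ((p : nat) = m /\ (sp : nat) = 0)).
  case: (boolP [exists p : 'I_m.+1, (f p \notin H) &&
                  (f (inord (if (p : nat) == m then 0 else (p : nat).+1)) \in H)]).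
    move=> /existsP [p /andP [fp fsp]].
    exists p, (inord (if (p : nat) == m then 0 else (p : nat).+1)); split => //; split => //.
    have hp := ltn_ord p.
    case: ((p : nat) =P m) => Hp /=; rewrite inordK; lia.
  move=> /existsPn no.
  have step : forall x, x <= m -> f (inord x) \notin H ->
      f (inord (if x == m then 0 else x.+1)) \notin H.
    move=> x xm nx; have := no (inord x); rewrite nx /= inordK //.
  have up : forall d, k + d <= m -> f (inord (k + d)) \notin H.
    elim => [|d IH] hd; first by rewrite addn0 inord_val.
    have := step (k + d) ltac:(lia) (IH ltac:(lia)).
    case: (k + d =P m) => Hd; first lia.
    by rewrite addnS.
  have hk := ltn_ord k.
  have z : f (inord 0) \notin H.
    have := step m (leqnn m); rewrite eqxx; apply.
    have := up (m - k) ltac:(lia); by rewrite subnKC //; lia.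
  have all : forall x, x <= m -> f (inord x) \notin H.
    elim => [|x IH] hx //.
    have := step x ltac:(lia) (IH ltac:(lia)).
    by case: (x =P m) => Hx //; lia.
  have := all i ltac:(have := ltn_ord i; lia).
  by rewrite inord_val fi.
have hp := ltn_ord p; have hsp' := ltn_ord sp.
have C : forall x, x \in H -> e (f p) x.
  case: (Hh _ fp) => // A; exfalso.
  have := A _ fsp; rewrite (_ : e (f p) (f sp) = true) //.
  apply/adj; lia.
have [q [fq qsp]] : exists q, f q \in H /\ q != sp.
  case: (i =P sp) => E; last by exists i; split => //; apply/eqP.
  exists j; split => //; by rewrite -E eq_sym.
have qsp' : (q : nat) <> sp by move=> E; move/eqP: qsp; apply; apply: val_inj.
have qp : (q : nat) <> p.
  move=> E; have E' : q = p by apply: val_inj.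
  by move: fp; rewrite -E' fq.
have hq := ltn_ord q.
have epq := C _ fq; move/adj: epq => epq.
have [t ht] := @succ_ord _ sp.
have htt := ltn_ord t.
case: (boolP (f t \in H)) => ft.
  move/adj: (C _ ft); lia.
have ets : e (f t) (f sp) by apply/adj; lia.
case: (Hh _ ft) => [Ct|At]; last by move: (At _ fsp); rewrite ets.
move/adj: (Ct _ fq); lia.
Qed.

Theorem mainTheorem4 (T : finType) (e : rel T)
    (e_sym : symmetric e) (e_irr : irreflexive e)
    (H : {set T}) :
  ~ has_induced_banner e ->
  homogeneous e H ->
  forall h, h \in H ->
    (no_odd_hole e [set: T] <->
     (no_odd_hole e H /\ no_odd_hole e (h |: ~: H))).
Proof.
move=> _ [_ Hh] h hH; split.
  move=> NOH; split; move=> [n [f [Ho [H4 [Hinj [Hin Hadj]]]]]]; apply: NOH;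
    exists n, f; split => //; do 3 split => //; move=> i; by rewrite in_setT.
move=> [N1 N2] [n [f [Ho [H4 [Hinj [Hin Hadj]]]]]].
case: (boolP [forall i, f i \in H]) => allH.
  apply: N1; exists n, f; split => //; do 3 split => //.
  by move=> i; move/forallP: allH.
have [k fk] : exists k, f k \notin H.
  by move: allH; rewrite negb_forall => /existsP.
case: (boolP [exists i, [exists j, [&& i != j, f i \in H & f j \in H]]]).
  move=> /existsP [i /existsP [j /and3P [ij fi fj]]].
  exfalso; exact: (@key _ _ _ _ _ Ho H4 Hadj Hh _ _ _ ij fi fj fk).
move=> /existsPn no.
have uniqH : forall i j, f i \in H -> f j \in H -> i = j.
  move=> i j fi fj; apply/eqP; case: (boolP (i == j)) => // ij.
  by move/existsPn: (no i) => /(_ j); rewrite ij fi fj.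
pose g i := if f i \in H then h else f i.
apply: N2; exists n, g; split => //; split => //; split.
  move=> i j; rewrite /g.
  case: (boolP (f i \in H)) => fi; case: (boolP (f j \in H)) => fj.
  - by move=> _; apply: uniqH.
  - by move=> E; move: fj; rewrite -E hH.
  - by move=> E; move: fi; rewrite E hH.
  - by move=> /Hinj.
split.
  move=> i; rewrite /g; case: (boolP (f i \in H)) => fi; rewrite !inE ?eqxx //.
  by rewrite fi orbT.
move=> i j; rewrite -Hadj /g.
have gen : forall x y, x \in H -> y \notin H -> e y x = e y h.
  move=> x y xH yH; case: (Hh y yH) => [C|A].
    by rewrite !C.
  by rewrite (negbTE (A x xH)) (negbTE (A h hH)).
case: (boolP (f i \in H)) => fi; case: (boolP (f j \in H)) => fj.
- by rewrite (uniqH _ _ fi fj) !e_irr.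
- by rewrite (e_sym h) (e_sym (f i)) (gen _ _ fi fj).
- by rewrite (gen _ _ fj fi).
- by [].
Qed.
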